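(* For every integer $n\ge 2$, the subdivision scheme $S_n$ generates $C^1$ limit functions, i.e. for every bounded initial sequence $\mathbf f^0$ the limit function generated by $S_n$ from $\mathbf f^0$ is continuously differentiable.
   Context: For an integer $n\ge1$, the subdivision scheme $S_n$ acts on real sequences $\mathbf f^k=(f^k_i)_{i\in\mathbb Z}$ (the value $f^k_i$ being associated with the dyadic point $2^{-k}i$), starting from initial data $\mathbf f^0$, by the refinement rules $$f^{k+1}_{2i}=\frac1{2n-1}\sum_{j=-n+1}^{n-1}f^k_{i+j},\qquad f^{k+1}_{2i+1}=\frac1{2n}\sum_{j=-n+1}^{n}f^k_{i+j},\qquad i\in\mathbb Z,\ k\ge0.$$ The scheme is convergent: for every bounded $\mathbf f^0$ there is a continuous $F:\mathbb R\to\mathbb R$ (the limit function) with $\lim_{k\to\infty}\sup_{i}|f^k_i-F(2^{-k}i)|=0$. *)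

(* Defs.v *)
From Stdlib Require Import Reals ZArith.
From Coquelicot Require Import Coquelicot.
Open Scope R_scope.

(* For m = 2i or m = 2i+1 we have i = m / 2
   (floor division), and
     f^{k+1}_{2i}   = 1/(2n-1) * sum_{j=-n+1}^{n-1} f^k_{i+j}
     f^{k+1}_{2i+1} = 1/(2n)   * sum_{j=-n+1}^{n}   f^k_{i+j}.
   The sums are written with t = j + n - 1 ranging over 0..2n-2 (resp. 0..2n-1);
   note [sum_f_R0 g N] = g 0 + ... + g N. *)
Definition subdiv_step (n : nat) (f : Z -> R) (m : Z) : R :=
  let i := (m / 2)%Z in
  if Z.even m then
    sum_f_R0 (fun t => f (i - Z.of_nat n + 1 + Z.of_nat t)%Z) (2 * n - 2)
      / INR (2 * n - 1)
  else
    sum_f_R0 (fun t => f (i - Z.of_nat n + 1 + Z.of_nat t)%Z) (2 * n - 1)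
      / INR (2 * n).

Fixpoint subdiv (n : nat) (f0 : Z -> R) (k : nat) : Z -> R :=
  match k with
  | O => f0
  | S k' => subdiv_step n (subdiv n f0 k')
  end.

Definition bounded_seq (f : Z -> R) : Prop :=
  exists M : R, forall i : Z, Rabs (f i) <= M.

Definition is_limit_function (n : nat) (f0 : Z -> R) (F : R -> R) : Prop :=
  (forall x : R, continuous F x) /\
  (forall eps : R, 0 < eps -> exists K : nat, forall k : nat, (K <= k)%nat ->
     forall i : Z, Rabs (subdiv n f0 k i - F (IZR i / 2 ^ k)) <= eps).

Definition is_C1 (F : R -> R) : Prop :=
  (forall x : R, ex_derive F x) /\ (forall x : R, continuous (Derive F) x).

(* Main.v *)
Require Import Defs.
From Stdlib Require Import Reals ZArith.
From Coquelicot Require Import Coquelicot.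
From Stdlib Require Import Lra Lia.
Open Scope R_scope.

Lemma sumL1 (h : nat -> R) (N : nat) :
  sum_f_R0 (fun t => (INR t + 1) * (h (S t) - h t)) N = (INR N + 1) * h (S N) - sum_f_R0 h N.
Proof.
  induction N as [|N IH]. simpl. ring.
  rewrite !tech5, IH. rewrite S_INR. ring.
Qed.

Lemma tele (h : nat -> R) (N : nat) :
  sum_f_R0 (fun t => h (S t) - h t) N = h (S N) - h O.
Proof. induction N as [|N IH]. simpl. ring. rewrite tech5, IH. ring. Qed.

Lemma sumL2 (h : nat -> R) (N : nat) :
  sum_f_R0 (fun t => (INR N + 1 - INR t) * (h (S t) - h t)) N
  = sum_f_R0 (fun t => h (S t)) N - (INR N + 1) * h O.
Proof.
  induction N as [|N IH]. simpl. ring.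
  rewrite tech5.
  rewrite (sum_eq _ (fun t => (INR N + 1 - INR t) * (h (S t) - h t) + (h (S t) - h t))).
  2:{ intros t _. rewrite S_INR. ring. }
  rewrite plus_sum, IH, tele. rewrite tech5. rewrite !S_INR. ring.
Qed.

Lemma sumt (N : nat) : sum_f_R0 (fun t => INR t + 1) N = (INR N + 1) * (INR N + 2) / 2.
Proof. induction N as [|N IH]. simpl. field. rewrite tech5, IH, S_INR. field. Qed.

Lemma sumt2 (N : nat) : sum_f_R0 (fun t => INR N + 1 - INR t) N = (INR N + 1) * (INR N + 2) / 2.
Proof.
  rewrite (sum_eq _ (fun t => (INR N + 2) - (INR t + 1))) by (intros; ring).
  rewrite minus_sum, sum_cte, sumt, S_INR. field.
Qed.

Lemma sum_nonpos (y : nat -> R) N : (forall t, (t <= N)%nat -> y t <= 0) -> sum_f_R0 y N <= 0.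
Proof.
  induction N as [|N IH]; intros H; simpl. apply H; lia.
  assert (sum_f_R0 y N <= 0) by (apply IH; intros; apply H; lia).
  assert (y (S N) <= 0) by (apply H; lia). lra.
Qed.

Lemma sum_le_term (y : nat -> R) N t0 : (forall t, (t <= N)%nat -> y t <= 0) -> (t0 <= N)%nat ->
  sum_f_R0 y N <= y t0.
Proof.
  induction N as [|N IH]; intros H Ht.
  - simpl. replace t0 with O by lia. lra.
  - simpl. destruct (Nat.eq_dec t0 (S N)) as [->|Hne].
    + assert (sum_f_R0 y N <= 0) by (apply sum_nonpos; intros; apply H; lia). lra.
    + assert (sum_f_R0 y N <= y t0) by (apply IH; [intros; apply H; lia| lia]).
      assert (y (S N) <= 0) by (apply H; lia). lra.
Qed.

Lemma avg_upper (w x : nat -> R) N th M t0 :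
  0 <= th -> (forall t, (t <= N)%nat -> th <= w t) -> sum_f_R0 w N = 1 ->
  (forall t, (t <= N)%nat -> x t <= M) -> (t0 <= N)%nat ->
  sum_f_R0 (fun t => w t * x t) N <= M - th * (M - x t0).
Proof.
  intros Hth Hw Hs Hx Ht0.
  rewrite (sum_eq _ (fun t => w t * M + w t * (x t - M))) by (intros; ring).
  rewrite plus_sum.
  rewrite <- (scal_sum w N M) , Hs.
  assert (sum_f_R0 (fun t => w t * (x t - M)) N <= w t0 * (x t0 - M)).
  { apply (sum_le_term (fun t => w t * (x t - M))); auto. intros t Ht.
    assert (th <= w t) by auto. assert (x t <= M) by auto. nra. }
  assert (th <= w t0) by auto. assert (x t0 <= M) by auto. nra.
Qed.

Lemma avg_lower (w x : nat -> R) N th L t0 :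
  0 <= th -> (forall t, (t <= N)%nat -> th <= w t) -> sum_f_R0 w N = 1 ->
  (forall t, (t <= N)%nat -> L <= x t) -> (t0 <= N)%nat ->
  L + th * (x t0 - L) <= sum_f_R0 (fun t => w t * x t) N.
Proof.
  intros Hth Hw Hs Hx Ht0.
  assert (H := avg_upper w (fun t => - x t) N th (-L) t0 Hth Hw Hs).
  rewrite (sum_eq _ (fun t => (w t * x t) * -1)) in H by (intros; ring).
  rewrite <- scal_sum in H.
  assert (Hh: -1 * sum_f_R0 (fun t => w t * x t) N <= - L - th * (- L - - x t0)).
  { apply H; auto. intros t Ht. specialize (Hx t Ht). lra. }
  lra.
Qed.

Definition Np (n : nat) := (2 * n - 2)%nat.
Definition hh (f : Z -> R) (n : nat) (i : Z) (t : nat) := f (i - Z.of_nat n + 1 + Z.of_nat t)%Z.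
Definition DD (n : nat) := (INR (Np n) + 1) * (INR (Np n) + 2).
Definition theta (n : nat) := 2 / DD n.
Definition dd n f0 k l := 2 ^ k * (subdiv n f0 k (l + 1)%Z - subdiv n f0 k l).

Lemma div2_even i : ((2 * i) / 2 = i)%Z.
Proof. rewrite Z.mul_comm. apply Z.div_mul. lia. Qed.
Lemma div2_odd i : ((2 * i + 1) / 2 = i)%Z.
Proof. pose proof (Z.div_mod (2*i+1) 2). pose proof (Z.mod_pos_bound (2*i+1) 2). lia. Qed.

Lemma step_even n f i : (2 <= n)%nat ->
  subdiv_step n f (2 * i)%Z = sum_f_R0 (hh f n i) (Np n) / (INR (Np n) + 1).
Proof.
  intros Hn. unfold subdiv_step. rewrite div2_even.
  rewrite Z.even_mul. simpl. unfold Np.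
  replace (n + (n + 0) - 1)%nat with (S (2 * n - 2)) by lia.
  rewrite S_INR. reflexivity.
Qed.

Lemma step_odd n f i : (2 <= n)%nat ->
  subdiv_step n f (2 * i + 1)%Z = sum_f_R0 (hh f n i) (S (Np n)) / (INR (Np n) + 2).
Proof.
  intros Hn. unfold subdiv_step. rewrite div2_odd.
  rewrite Z.even_add, Z.even_mul. simpl. unfold Np.
  replace (n + (n + 0) - 1)%nat with (S (2 * n - 2)) by lia.
  replace (n + (n + 0))%nat with (S (S (2 * n - 2))) by lia.
  rewrite !S_INR. replace (INR (2*n-2) + 1 + 1) with (INR (2*n-2) + 2) by ring. reflexivity.
Qed.

Lemma DD_pos n : 0 < DD n.
Proof. unfold DD. pose proof (pos_INR (Np n)). nra. Qed.

Lemma dd_hh n f0 k i t :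
  dd n f0 k (i - Z.of_nat n + 1 + Z.of_nat t)%Z
  = 2 ^ k * (hh (subdiv n f0 k) n i (S t) - hh (subdiv n f0 k) n i t).
Proof.
  unfold dd, hh. replace (i - Z.of_nat n + 1 + Z.of_nat (S t))%Z with (i - Z.of_nat n + 1 + Z.of_nat t + 1)%Z by lia. reflexivity.
Qed.

Lemma rep n f0 k m : (2 <= n)%nat ->
  exists w : nat -> R, (forall t, (t <= Np n)%nat -> theta n <= w t) /\
    sum_f_R0 w (Np n) = 1 /\
    dd n f0 (S k) m = sum_f_R0 (fun t => w t * dd n f0 k (m / 2 - Z.of_nat n + 1 + Z.of_nat t)%Z) (Np n).
Proof.
  intros Hn.
  pose proof (Z.div_mod m 2). pose proof (Z.mod_pos_bound m 2).
  set (i := (m / 2)%Z) in *.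
  set (f := subdiv n f0 k).
  set (h := hh f n i).
  pose proof (DD_pos n) as HD.
  pose proof (pos_INR (Np n)) as HN.
  assert (Hsub : forall z, subdiv n f0 (S k) z = subdiv_step n f z) by reflexivity.
  destruct (Z.eq_dec (m mod 2) 0) as [Hm0|Hm1].
  - exists (fun t => 2 * (INR t + 1) / DD n). split; [|split].
    + intros t Ht. unfold theta. pose proof (pos_INR t).
      apply Rmult_le_compat_r. left; apply Rinv_0_lt_compat; auto. lra.
    + rewrite (sum_eq _ (fun t => (INR t + 1) * (2 / DD n))) by (intros; unfold Rdiv; ring).
      rewrite <- scal_sum, sumt. unfold DD. field. lra.
    + rewrite (sum_eq _ (fun t => ((INR t + 1) * (h (S t) - h t)) * (2 * 2 ^ k / DD n))).
      2:{ intros t _. rewrite dd_hh. fold f h. unfold Rdiv. ring. }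
      rewrite <- scal_sum, sumL1.
      replace m with (2 * i)%Z by lia.
      unfold dd. rewrite !Hsub. rewrite step_even by auto. rewrite step_odd by auto.
      rewrite tech5. fold h. unfold DD. simpl. field. lra.
  - assert (Hm : m = (2 * i + 1)%Z) by lia.
    exists (fun t => 2 * (INR (Np n) + 1 - INR t) / DD n). split; [|split].
    + intros t Ht. unfold theta. apply le_INR in Ht.
      apply Rmult_le_compat_r. left; apply Rinv_0_lt_compat; auto. lra.
    + rewrite (sum_eq _ (fun t => (INR (Np n) + 1 - INR t) * (2 / DD n))) by (intros; unfold Rdiv; ring).
      rewrite <- scal_sum, sumt2. unfold DD. field. lra.
    + rewrite (sum_eq _ (fun t => ((INR (Np n) + 1 - INR t) * (h (S t) - h t)) * (2 * 2 ^ k / DD n))).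
      2:{ intros t _. rewrite dd_hh. fold f h. unfold Rdiv. ring. }
      rewrite <- scal_sum, sumL2.
      rewrite Hm.
      unfold dd. rewrite !Hsub.
      replace (2 * i + 1 + 1)%Z with (2 * (i + 1))%Z by lia.
      rewrite step_even by auto. rewrite step_odd by auto.
      rewrite (sum_eq (hh f n (i + 1)) (fun t => h (S t))).
      2:{ intros t _. unfold h, hh. f_equal. lia. }
      fold h. rewrite (decomp_sum h (S (Np n))) by lia. simpl pred.
      unfold DD. simpl. field. lra.
Qed.

Lemma abs_le_iff x b : Rabs x <= b <-> - b <= x <= b.
Proof. split; intros; [split_Rabs; lra| apply Rabs_le; lra]. Qed.

Definition RR (n : nat) := (4 * Z.of_nat n - 4)%Z.

Lemma max_window (g : Z -> R) a (K : nat) : exists j, (a <= j <= a + Z.of_nat K)%Z /\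
  forall j', (a <= j' <= a + Z.of_nat K)%Z -> g j' <= g j.
Proof.
  induction K as [|K [j [Hj Hmax]]].
  - exists a. split. lia. intros j' Hj'. replace j' with a by lia. lra.
  - destruct (Rle_dec (g (a + Z.of_nat (S K))%Z) (g j)) as [Hle|Hlt].
    + exists j. split. lia. intros j' Hj'.
      destruct (Z.eq_dec j' (a + Z.of_nat (S K))%Z) as [->|Hne]. auto.
      apply Hmax. lia.
    + exists (a + Z.of_nat (S K))%Z. split. lia. intros j' Hj'.
      destruct (Z.eq_dec j' (a + Z.of_nat (S K))%Z) as [->|Hne]. lra.
      assert (g j' <= g j) by (apply Hmax; lia). lra.
Qed.

Lemma theta_pos n : 0 < theta n.
Proof. unfold theta. pose proof (DD_pos n). apply Rdiv_lt_0_compat; lra. Qed.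

Lemma theta_lt1 n : (2 <= n)%nat -> theta n < 1.
Proof.
  intros Hn. unfold theta, DD.
  assert (1 <= INR (Np n)) by (apply (le_INR 1); unfold Np; lia).
  apply Rlt_div_l. nra. nra.
Qed.

Lemma contr1 n f0 k Om : (2 <= n)%nat ->
  (forall l l', (Z.abs (l - l') <= RR n)%Z -> Rabs (dd n f0 k l - dd n f0 k l') <= Om) ->
  forall m m', (Z.abs (m - m') <= RR n)%Z ->
  dd n f0 (S k) m - dd n f0 (S k) m' <= (1 - theta n) * Om.
Proof.
  intros Hn HO m m' Hmm.
  pose proof (Z.div_mod m 2). pose proof (Z.mod_pos_bound m 2).
  pose proof (Z.div_mod m' 2). pose proof (Z.mod_pos_bound m' 2).
  set (i := (m / 2)%Z) in *. set (i' := (m' / 2)%Z) in *.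
  assert (Hii : (Z.abs (i - i') <= 2 * Z.of_nat n - 2)%Z) by (unfold RR in Hmm; lia).
  set (a := (Z.min i i' - Z.of_nat n + 1)%Z).
  destruct (max_window (dd n f0 k) a (4 * n - 4)) as [js [Hjs Hmax]].
  assert (HK : Z.of_nat (4 * n - 4) = RR n) by (unfold RR; lia).
  rewrite HK in Hjs, Hmax.
  set (M := dd n f0 k js).
  assert (Hlow : forall j, (a <= j <= a + RR n)%Z -> M - Om <= dd n f0 k j).
  { intros j Hj. assert (Rabs (dd n f0 k j - dd n f0 k js) <= Om) by (apply HO; lia).
    apply abs_le_iff in H3. unfold M. lra. }
  set (c := (Z.max i i' - Z.of_nat n + 1)%Z).
  pose proof (theta_pos n) as Hth.
  destruct (rep n f0 k m Hn) as [w [Hw [Hsw Hrw]]].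
  destruct (rep n f0 k m' Hn) as [w' [Hw' [Hsw' Hrw']]].
  fold i in Hrw. fold i' in Hrw'.
  assert (U : dd n f0 (S k) m <= M - theta n * (M - dd n f0 k c)).
  { rewrite Hrw.
    replace c with (i - Z.of_nat n + 1 + Z.of_nat (Z.to_nat (Z.max i i' - i)))%Z by (unfold c; lia).
    apply (avg_upper w (fun t => dd n f0 k (i - Z.of_nat n + 1 + Z.of_nat t)%Z)); auto. lra.
    intros t Ht. apply Hmax. unfold Np in Ht. unfold a, RR. lia.
    unfold Np. lia. }
  assert (Lo : (M - Om) + theta n * (dd n f0 k c - (M - Om)) <= dd n f0 (S k) m').
  { rewrite Hrw'.
    replace c with (i' - Z.of_nat n + 1 + Z.of_nat (Z.to_nat (Z.max i i' - i')))%Z by (unfold c; lia).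
    apply (avg_lower w' (fun t => dd n f0 k (i' - Z.of_nat n + 1 + Z.of_nat t)%Z)); auto. lra.
    intros t Ht. apply Hlow. unfold Np in Ht. unfold a, RR. lia.
    unfold Np. lia. }
  nra.
Qed.

Lemma contr n f0 k Om : (2 <= n)%nat ->
  (forall l l', (Z.abs (l - l') <= RR n)%Z -> Rabs (dd n f0 k l - dd n f0 k l') <= Om) ->
  forall m m', (Z.abs (m - m') <= RR n)%Z ->
  Rabs (dd n f0 (S k) m - dd n f0 (S k) m') <= (1 - theta n) * Om.
Proof.
  intros Hn HO m m' Hmm. apply abs_le_iff. split.
  - assert (dd n f0 (S k) m' - dd n f0 (S k) m <= (1 - theta n) * Om)
      by (apply contr1; auto; lia). lra.
  - apply contr1; auto.
Qed.

Definition mu n := 1 - theta n.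

Lemma Omega_bound n f0 B : (2 <= n)%nat -> (forall i, Rabs (f0 i) <= B) ->
  forall k l l', (Z.abs (l - l') <= RR n)%Z ->
  Rabs (dd n f0 k l - dd n f0 k l') <= 4 * B * mu n ^ k.
Proof.
  intros Hn HB k. induction k as [|k IH]; intros l l' Hl.
  - unfold dd. simpl.
    pose proof (HB (l+1)%Z). pose proof (HB l). pose proof (HB (l'+1)%Z). pose proof (HB l').
    apply abs_le_iff in H, H0, H1, H2. apply abs_le_iff. lra.
  - replace (4 * B * mu n ^ S k) with ((1 - theta n) * (4 * B * mu n ^ k)) by (unfold mu; simpl; ring).
    apply contr; auto.
Qed.

Lemma consist n f0 B : (2 <= n)%nat -> (forall i, Rabs (f0 i) <= B) ->
  forall k m, Rabs (dd n f0 (S k) m - dd n f0 k (m / 2)%Z) <= 4 * B * mu n ^ k.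
Proof.
  intros Hn HB k m.
  destruct (rep n f0 k m Hn) as [w [Hw [Hsw Hrw]]].
  pose proof (theta_pos n).
  set (D := dd n f0 k (m / 2)%Z). set (Om := 4 * B * mu n ^ k).
  assert (Hx : forall t, (t <= Np n)%nat ->
     Rabs (dd n f0 k (m / 2 - Z.of_nat n + 1 + Z.of_nat t)%Z - D) <= Om).
  { intros t Ht. apply Omega_bound; auto. unfold Np in Ht. unfold RR. lia. }
  apply abs_le_iff. rewrite Hrw. split.
  - assert (D - Om + 0 * (dd n f0 k (m / 2 - Z.of_nat n + 1 + Z.of_nat 0)%Z - (D - Om)) <=
      sum_f_R0 (fun t => w t * dd n f0 k (m / 2 - Z.of_nat n + 1 + Z.of_nat t)%Z) (Np n)).
    { apply (avg_lower w (fun t => dd n f0 k (m / 2 - Z.of_nat n + 1 + Z.of_nat t)%Z)); auto. lra. intros t Ht. apply Hw in Ht. lra.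
      intros t Ht. apply Hx in Ht. apply abs_le_iff in Ht. lra. lia. }
    lra.
  - assert (sum_f_R0 (fun t => w t * dd n f0 k (m / 2 - Z.of_nat n + 1 + Z.of_nat t)%Z) (Np n)
       <= D + Om - 0 * (D + Om - dd n f0 k (m / 2 - Z.of_nat n + 1 + Z.of_nat 0)%Z)).
    { apply (avg_upper w (fun t => dd n f0 k (m / 2 - Z.of_nat n + 1 + Z.of_nat t)%Z)); auto. lra. intros t Ht. apply Hw in Ht. lra.
      intros t Ht. apply Hx in Ht. apply abs_le_iff in Ht. lra. lia. }
    lra.
Qed.

Lemma mu_pos n : (2 <= n)%nat -> 0 < mu n < 1.
Proof. intros. unfold mu. pose proof (theta_pos n). pose proof (theta_lt1 n H). lra. Qed.

Lemma pow2_Z p : IZR (2 ^ Z.of_nat p) = 2 ^ p.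
Proof. rewrite <- pow_IZR. reflexivity. Qed.

Lemma anc n f0 B : (2 <= n)%nat -> (forall i, Rabs (f0 i) <= B) ->
  forall K p l, Rabs (dd n f0 (K + p) l - dd n f0 K (l / 2 ^ Z.of_nat p)%Z)
     <= 4 * B * mu n ^ K * (1 - mu n ^ p) / theta n.
Proof.
  intros Hn HB K p. pose proof (theta_pos n) as Hth.
  induction p as [|p IH]; intros l.
  - rewrite Nat.add_0_r. simpl (2 ^ Z.of_nat 0)%Z. rewrite Z.div_1_r.
    replace (dd n f0 K l - dd n f0 K l) with 0 by ring. rewrite Rabs_R0.
    simpl. unfold Rdiv. right; ring.
  - rewrite Nat.add_succ_r.
    replace (l / 2 ^ Z.of_nat (S p))%Z with ((l / 2) / 2 ^ Z.of_nat p)%Z.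
    2:{ rewrite Z.div_div by (try lia; apply Z.pow_pos_nonneg; lia).
        f_equal. rewrite Nat2Z.inj_succ, Z.pow_succ_r by lia. reflexivity. }
    pose proof (consist n f0 B Hn HB (K + p) l) as H1.
    pose proof (IH (l / 2)%Z) as H2.
    apply abs_le_iff in H1, H2. apply abs_le_iff.
    assert (E : 4 * B * mu n ^ K * (1 - mu n ^ S p) / theta n =
       4 * B * mu n ^ (K + p) + 4 * B * mu n ^ K * (1 - mu n ^ p) / theta n).
    { rewrite pow_add. simpl. unfold mu at 2. field. lra. }
    rewrite E. lra.
Qed.

Lemma B_nonneg (f0 : Z -> R) B : (forall i, Rabs (f0 i) <= B) -> 0 <= B.
Proof. intros H. specialize (H 0%Z). pose proof (Rabs_pos (f0 0%Z)). lra. Qed.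

Lemma anc2 n f0 B : (2 <= n)%nat -> (forall i, Rabs (f0 i) <= B) ->
  forall K p l, Rabs (dd n f0 (K + p) l - dd n f0 K (l / 2 ^ Z.of_nat p)%Z)
     <= 4 * B * mu n ^ K / theta n.
Proof.
  intros Hn HB K p l. eapply Rle_trans. apply anc; auto.
  pose proof (theta_pos n). pose proof (mu_pos n Hn). pose proof (B_nonneg f0 B HB).
  assert (0 <= mu n ^ p) by (apply pow_le; lra).
  assert (0 <= mu n ^ K) by (apply pow_le; lra).
  unfold Rdiv. apply Rmult_le_compat_r. left; apply Rinv_0_lt_compat; lra.
  assert (0 <= 4 * B * mu n ^ K) by (apply Rmult_le_pos; lra).
  nra.
Qed.

Lemma position l p : IZR (l / 2 ^ Z.of_nat p) <= IZR l / 2 ^ p < IZR (l / 2 ^ Z.of_nat p) + 1.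
Proof.
  assert (Hp : (0 < 2 ^ Z.of_nat p)%Z) by (apply Z.pow_pos_nonneg; lia).
  pose proof (Z.div_mod l (2 ^ Z.of_nat p)). pose proof (Z.mod_pos_bound l (2 ^ Z.of_nat p) Hp).
  set (a := (l / 2 ^ Z.of_nat p)%Z) in *. set (q := (2 ^ Z.of_nat p)%Z) in *.
  assert (H1 : (q * a <= l)%Z) by lia. assert (H2 : (l < q * (a + 1))%Z) by lia.
  apply IZR_le in H1. apply IZR_lt in H2. rewrite mult_IZR in H1, H2. rewrite plus_IZR in H2.
  unfold q in H1, H2. rewrite pow2_Z in H1, H2.
  assert (0 < 2 ^ p) by (apply pow_lt; lra).
  split.
  - apply Rle_div_r; auto. lra.
  - apply Rlt_div_l; auto. lra.
Qed.

Definition EE n B K := 4 * B * mu n ^ K * (2 / theta n + 1).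

Lemma Loc n f0 B : (2 <= n)%nat -> (forall i, Rabs (f0 i) <= B) ->
  forall x K k k' l l', (K <= k)%nat -> (K <= k')%nat ->
  Rabs (IZR l / 2 ^ k - x) <= / 2 ^ K -> Rabs (IZR l' / 2 ^ k' - x) <= / 2 ^ K ->
  Rabs (dd n f0 k l - dd n f0 k' l') <= EE n B K.
Proof.
  intros Hn HB x K k k' l l' Hk Hk' Hl Hl'.
  assert (HP : 0 < 2 ^ K) by (apply pow_lt; lra).
  assert (Hconv : forall k l, (K <= k)%nat -> Rabs (IZR l / 2 ^ k - x) <= / 2 ^ K ->
    exists a, Rabs (dd n f0 k l - dd n f0 K a) <= 4 * B * mu n ^ K / theta n /\
       2 ^ K * x - 2 < IZR a <= 2 ^ K * x + 1).
  { intros k0 l0 Hk0 Hl0. exists (l0 / 2 ^ Z.of_nat (k0 - K))%Z. split.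
    - replace k0 with (K + (k0 - K))%nat at 1 by lia. apply anc2; auto.
    - pose proof (position l0 (k0 - K)) as Hpos.
      assert (Hpk : 2 ^ k0 = 2 ^ K * 2 ^ (k0 - K)).
      { rewrite <- pow_add. f_equal. lia. }
      assert (0 < 2 ^ (k0 - K)) by (apply pow_lt; lra).
      assert (Hy : IZR l0 / 2 ^ (k0 - K) = 2 ^ K * (IZR l0 / 2 ^ k0)).
      { rewrite Hpk. field. lra. }
      rewrite Hy in Hpos. apply abs_le_iff in Hl0.
      assert (2 ^ K * (IZR l0 / 2 ^ k0) <= 2 ^ K * x + 1).
      { replace (2 ^ K * x + 1) with (2 ^ K * (x + / 2 ^ K)) by (field; lra).
        apply Rmult_le_compat_l; lra. }
      assert (2 ^ K * x - 1 <= 2 ^ K * (IZR l0 / 2 ^ k0)).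
      { replace (2 ^ K * x - 1) with (2 ^ K * (x - / 2 ^ K)) by (field; lra).
        apply Rmult_le_compat_l; lra. }
      lra. }
  destruct (Hconv k l Hk Hl) as [a [Ha1 Ha2]].
  destruct (Hconv k' l' Hk' Hl') as [a' [Ha1' Ha2']].
  assert (Haa : (Z.abs (a - a') <= RR n)%Z).
  { assert (IZR a - IZR a' < 3) by lra. assert (IZR a' - IZR a < 3) by lra.
    rewrite <- minus_IZR in H, H0. apply lt_IZR in H. apply lt_IZR in H0. unfold RR. lia. }
  pose proof (Omega_bound n f0 B Hn HB K a a' Haa) as H3.
  apply abs_le_iff in Ha1, Ha1', H3. apply abs_le_iff.
  assert (E : EE n B K = 4 * B * mu n ^ K / theta n + 4 * B * mu n ^ K / theta n + 4 * B * mu n ^ K).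
  { unfold EE. pose proof (theta_pos n). field. lra. }
  rewrite E. lra.
Qed.

Lemma cont_eps F x : continuous F x ->
  forall eps, 0 < eps -> exists del, 0 < del /\ forall y, Rabs (y - x) < del -> Rabs (F y - F x) < eps.
Proof.
  intros H eps Heps. apply continuity_pt_filterlim in H.
  destruct (H eps Heps) as [del [Hdel Hy]].
  exists del. split. lra. intros y Hyx.
  destruct (Req_dec y x) as [->|Hne].
  - replace (F x - F x) with 0 by ring. rewrite Rabs_R0. lra.
  - apply (Hy y). split. split. exact I. auto. exact Hyx.
Qed.

Lemma eps_cont G x : (forall eps, 0 < eps -> exists del, 0 < del /\ forall y, Rabs (y - x) < del -> Rabs (G y - G x) < eps) -> continuous G x.
Proof.
  intros H. apply continuity_pt_filterlim. intros eps Heps.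
  destruct (H eps Heps) as [del [Hdel Hy]]. exists del. split. lra.
  intros y [_ Hyx]. apply Hy. exact Hyx.
Qed.

Lemma inv2pow_pos k : 0 < / 2 ^ k.
Proof. apply Rinv_0_lt_compat, pow_lt; lra. Qed.

Lemma inv2pow_mono K k : (K <= k)%nat -> / 2 ^ k <= / 2 ^ K.
Proof.
  intros H. apply Rinv_le_contravar. apply pow_lt; lra. apply Rle_pow; lra || lia.
Qed.

Lemma inv2pow_S k : / 2 ^ S k = / 2 ^ k / 2.
Proof. simpl. field. apply pow_nonzero. lra. Qed.

Lemma inv2pow_small eps : 0 < eps -> exists N, forall k, (N <= k)%nat -> / 2 ^ k < eps.
Proof.
  intros He. destruct (pow_lt_1_zero (/2)) with (y := eps) as [N HN].
  rewrite Rabs_pos_eq; lra. auto.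
  exists N. intros k Hk. specialize (HN k Hk). rewrite pow_inv in HN.
  rewrite Rabs_pos_eq in HN; auto. left; apply inv2pow_pos.
Qed.

Lemma ip_pos k x : IZR (Int_part (2 ^ k * x)) / 2 ^ k <= x /\ x - / 2 ^ k < IZR (Int_part (2 ^ k * x)) / 2 ^ k.
Proof.
  destruct (base_Int_part (2 ^ k * x)) as [H1 H2].
  assert (0 < 2 ^ k) by (apply pow_lt; lra).
  split.
  - apply Rle_div_l; auto. lra.
  - replace (x - / 2 ^ k) with ((2 ^ k * x - 1) / 2 ^ k) by (field; lra).
    apply Rmult_lt_compat_r. apply Rinv_0_lt_compat; auto. lra.
Qed.

Lemma ip_abs k x : Rabs (IZR (Int_part (2 ^ k * x)) / 2 ^ k - x) <= / 2 ^ k.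
Proof. destruct (ip_pos k x). apply abs_le_iff. lra. Qed.

Lemma EE_small n B : (2 <= n)%nat -> 0 <= B -> forall eps, 0 < eps -> exists K, EE n B K <= eps.
Proof.
  intros Hn HB eps He. pose proof (theta_pos n). pose proof (mu_pos n Hn).
  set (c := 4 * B * (2 / theta n + 1) + 1).
  assert (Hc : 1 <= c). { unfold c. assert (0 <= 2 / theta n) by (unfold Rdiv; apply Rmult_le_pos; [lra| left; apply Rinv_0_lt_compat; lra]). nra. }
  destruct (pow_lt_1_zero (mu n)) with (y := eps / c) as [N HN].
  rewrite Rabs_pos_eq; lra. apply Rdiv_lt_0_compat; lra.
  exists N. specialize (HN N (le_n _)). rewrite Rabs_pos_eq in HN by (apply pow_le; lra).
  unfold EE. assert (0 <= mu n ^ N) by (apply pow_le; lra).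
  apply Rlt_div_r in HN; [|lra].
  assert (0 <= 2 / theta n) by (unfold Rdiv; apply Rmult_le_pos; [lra| left; apply Rinv_0_lt_compat; lra]).
  unfold c in HN. nra.
Qed.

Lemma pow_le_one x j : 0 <= x <= 1 -> x ^ j <= 1.
Proof. intros H. induction j; simpl. lra. assert (0 <= x ^ j) by (apply pow_le; lra). nra. Qed.

Lemma EE_mono n B K k : (2 <= n)%nat -> 0 <= B -> (K <= k)%nat -> EE n B k <= EE n B K.
Proof.
  intros Hn HB Hk. pose proof (theta_pos n). pose proof (mu_pos n Hn).
  unfold EE.
  assert (0 <= 2 / theta n) by (unfold Rdiv; apply Rmult_le_pos; [lra| left; apply Rinv_0_lt_compat; lra]).
  assert (mu n ^ k <= mu n ^ K).
  { replace k with (K + (k - K))%nat by lia. rewrite pow_add.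
    assert (0 <= mu n ^ K) by (apply pow_le; lra).
    assert (mu n ^ (k - K) <= 1) by (apply pow_le_one; lra).
    nra. }
  assert (0 <= 4 * B * (2 / theta n + 1)) by nra.
  nra.
Qed.

Definition uu n f0 x k := dd n f0 k (Int_part (2 ^ k * x)).
Definition GG n f0 x : R := real (Lim_seq (uu n f0 x)).

Lemma G_spec n f0 B : (2 <= n)%nat -> (forall i, Rabs (f0 i) <= B) ->
  forall x K k l, (K <= k)%nat -> Rabs (IZR l / 2 ^ k - x) <= / 2 ^ K ->
  Rabs (dd n f0 k l - GG n f0 x) <= EE n B K.
Proof.
  intros Hn HB x K k l Hk Hl.
  pose proof (B_nonneg f0 B HB) as HB0.
  assert (Hc : ex_finite_lim_seq (uu n f0 x)).
  { apply ex_lim_seq_cauchy_corr. intros eps.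
    destruct (EE_small n B Hn HB0 (eps / 2)) as [K0 HK0]. destruct eps; simpl; lra.
    exists K0. intros p q Hp Hq. unfold uu.
    eapply Rle_lt_trans. apply (Loc n f0 B Hn HB x K0); auto.
    eapply Rle_trans. apply ip_abs. apply inv2pow_mono; auto.
    eapply Rle_trans. apply ip_abs. apply inv2pow_mono; auto.
    destruct eps; simpl in *; lra. }
  pose proof (Lim_seq_correct' _ Hc) as Hlim.
  apply is_lim_seq_Reals in Hlim. fold (GG n f0 x) in Hlim.
  apply Rle_plus_epsilon. intros eta Heta.
  destruct (Hlim eta Heta) as [N HN].
  set (k' := Nat.max N K).
  specialize (HN k' ltac:(lia)). unfold R_dist in HN.
  assert (H2 : Rabs (dd n f0 k l - uu n f0 x k') <= EE n B K).
  { unfold uu. apply (Loc n f0 B Hn HB x K); auto. lia.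
    eapply Rle_trans. apply ip_abs. apply inv2pow_mono. lia. }
  apply abs_le_iff in H2. apply abs_le_iff. apply Rabs_def2 in HN. lra.
Qed.

Lemma G_cont n f0 B : (2 <= n)%nat -> (forall i, Rabs (f0 i) <= B) ->
  forall x, continuous (GG n f0) x.
Proof.
  intros Hn HB x. pose proof (B_nonneg f0 B HB) as HB0.
  apply eps_cont. intros eps Heps.
  destruct (EE_small n B Hn HB0 (eps / 3)) as [K HK]. lra.
  exists (/ 2 ^ S K). split. apply inv2pow_pos.
  intros y Hy.
  set (k := S K). set (l := Int_part (2 ^ k * y)).
  pose proof (G_spec n f0 B Hn HB y k k l (le_n _) (ip_abs k y)) as H1.
  assert (H2 : Rabs (dd n f0 k l - GG n f0 x) <= EE n B K).
  { apply (G_spec n f0 B Hn HB); [unfold k; lia|].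
    pose proof (ip_abs k y). fold l in H. rewrite inv2pow_S in Hy.
    assert (/ 2 ^ k = / 2 ^ K / 2) by (unfold k; apply inv2pow_S).
    apply abs_le_iff in H. apply abs_le_iff. apply Rabs_def2 in Hy. lra. }
  assert (EE n B k <= EE n B K) by (apply EE_mono; auto; unfold k; lia).
  apply abs_le_iff in H1, H2. apply Rabs_def1; lra.
Qed.

Lemma dmvt (u : Z -> R) (P : Z) (L : nat) c e :
  (forall t, (t < L)%nat -> Rabs (u (P + Z.of_nat t + 1)%Z - u (P + Z.of_nat t)%Z - c) <= e) ->
  Rabs (u (P + Z.of_nat L)%Z - u P - INR L * c) <= INR L * e.
Proof.
  induction L as [|L IH]; intros H.
  - simpl. replace (P + 0)%Z with P by lia. replace (u P - u P - 0 * c) with 0 by ring.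
    rewrite Rabs_R0. lra.
  - assert (H1 := IH (fun t Ht => H t ltac:(lia))).
    assert (H2 := H L ltac:(lia)).
    replace (P + Z.of_nat (S L))%Z with (P + Z.of_nat L + 1)%Z by lia.
    rewrite S_INR. apply abs_le_iff in H1, H2. apply abs_le_iff. lra.
Qed.

Lemma interval n f0 F : is_limit_function n f0 F ->
  forall g e K a b, a <= b -> 0 <= e ->
  (forall k l, (K <= k)%nat -> a - / 2 ^ k < IZR l / 2 ^ k -> IZR l / 2 ^ k <= b ->
     Rabs (dd n f0 k l - g) <= e) ->
  Rabs (F b - F a - g * (b - a)) <= e * (b - a).
Proof.
  intros [HFc HFu] g e K a b Hab He Hd.
  assert (Main : forall eta, 0 < eta ->
    Rabs (F b - F a - g * (b - a)) <= e * (b - a) + (4 + Rabs g + e) * eta).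
  { intros eta Heta.
    destruct (HFu eta Heta) as [K1 HK1].
    destruct (cont_eps F a (HFc a) eta Heta) as [da [Hda Ha]].
    destruct (cont_eps F b (HFc b) eta Heta) as [db [Hdb Hb]].
    destruct (inv2pow_small (Rmin eta (Rmin da db))) as [N HN].
    { apply Rmin_pos; auto. apply Rmin_pos; auto. }
    set (k := Nat.max (Nat.max K K1) N).
    assert (Hs := HN k ltac:(unfold k; lia)).
    set (s := / 2 ^ k) in *.
    assert (Hs1 : s < eta) by (eapply Rlt_le_trans; [exact Hs| apply Rmin_l]).
    assert (Hs2 : s < da) by (eapply Rlt_le_trans; [exact Hs| eapply Rle_trans; [apply Rmin_r| apply Rmin_l]]).
    assert (Hs3 : s < db) by (eapply Rlt_le_trans; [exact Hs| eapply Rle_trans; [apply Rmin_r| apply Rmin_r]]).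
    assert (Hs0 : 0 < s) by apply inv2pow_pos.
    assert (HP2 : 0 < 2 ^ k) by (apply pow_lt; lra).
    set (P := Int_part (2 ^ k * a)). set (Q := Int_part (2 ^ k * b)).
    destruct (ip_pos k a) as [Pa1 Pa2]. fold P in Pa1, Pa2.
    destruct (ip_pos k b) as [Qb1 Qb2]. fold Q in Qb1, Qb2.
    fold s in Pa2, Qb2.
    assert (HPQ : (P <= Q)%Z).
    { apply Z.lt_succ_r. apply lt_IZR. rewrite succ_IZR.
      assert (IZR P / 2 ^ k < IZR Q / 2 ^ k + s) by lra.
      unfold s in H. replace (IZR Q / 2 ^ k + / 2 ^ k) with ((IZR Q + 1) / 2 ^ k) in H by (field; lra).
      unfold Rdiv in H. apply Rmult_lt_reg_r in H; auto. }
    set (L := Z.to_nat (Q - P)).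
    set (u := subdiv n f0 k).
    assert (HL : (P + Z.of_nat L)%Z = Q) by (unfold L; lia).
    assert (HLr : INR L * s = IZR Q / 2 ^ k - IZR P / 2 ^ k).
    { rewrite INR_IZR_INZ. unfold L. rewrite Z2Nat.id by lia. rewrite minus_IZR. unfold s. field. lra. }
    assert (Hm := dmvt u P L (g * s) (e * s)).
    rewrite HL in Hm.
    assert (Hm' : Rabs (u Q - u P - INR L * (g * s)) <= INR L * (e * s)).
    { apply Hm. intros t Ht.
      set (l := (P + Z.of_nat t)%Z).
      assert (Hlr : IZR P <= IZR l /\ IZR l + 1 <= IZR Q).
      { split. apply IZR_le. unfold l. lia. rewrite <- plus_IZR. apply IZR_le. unfold l. unfold L in Ht. lia. }
      assert (Hdl : Rabs (dd n f0 k l - g) <= e).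
      { apply Hd. unfold k; lia.
        - fold s. apply Rlt_le_trans with (IZR P / 2 ^ k). lra.
          unfold Rdiv. apply Rmult_le_compat_r. left; apply Rinv_0_lt_compat; auto. lra.
        - apply Rle_trans with (IZR Q / 2 ^ k). 
          unfold Rdiv. apply Rmult_le_compat_r. left; apply Rinv_0_lt_compat; auto. lra. lra. }
      replace (u (l + 1)%Z - u l - g * s) with ((dd n f0 k l - g) * s).
      2:{ unfold dd, s, u. field. lra. }
      rewrite Rabs_mult, (Rabs_pos_eq s) by lra. apply Rmult_le_compat_r; lra. }
    assert (E1 : Rabs (u Q - F (IZR Q / 2 ^ k)) <= eta) by (apply HK1; unfold k; lia).
    assert (E2 : Rabs (u P - F (IZR P / 2 ^ k)) <= eta) by (apply HK1; unfold k; lia).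
    assert (E3 : Rabs (F (IZR Q / 2 ^ k) - F b) < eta) by (apply Hb; apply Rabs_def1; lra).
    assert (E4 : Rabs (F (IZR P / 2 ^ k) - F a) < eta) by (apply Ha; apply Rabs_def1; lra).
    assert (E5 : Rabs (g * (INR L * s - (b - a))) <= Rabs g * eta).
    { rewrite Rabs_mult. apply Rmult_le_compat_l. apply Rabs_pos. apply Rabs_le. lra. }
    assert (E6 : INR L * (e * s) <= e * (b - a) + e * eta).
    { replace (INR L * (e * s)) with (e * (INR L * s)) by ring. rewrite <- Rmult_plus_distr_l.
      apply Rmult_le_compat_l; auto. lra. }
    replace (INR L * (g * s)) with (g * (INR L * s)) in Hm' by ring.
    apply abs_le_iff in E1, E2, E5, Hm'. apply Rabs_def2 in E3, E4. apply abs_le_iff. lra. }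
  apply Rle_plus_epsilon. intros eps Heps.
  assert (Hc : 0 < 4 + Rabs g + e) by (pose proof (Rabs_pos g); lra).
  replace (e * (b - a) + eps) with (e * (b - a) + (4 + Rabs g + e) * (eps / (4 + Rabs g + e))) by (field; lra).
  apply Main. apply Rdiv_lt_0_compat; lra.
Qed.

Lemma deriv n f0 B F : (2 <= n)%nat -> (forall i, Rabs (f0 i) <= B) -> is_limit_function n f0 F ->
  forall x, derivable_pt_lim F x (GG n f0 x).
Proof.
  intros Hn HB HF x eps Heps. pose proof (B_nonneg f0 B HB) as HB0.
  destruct (EE_small n B Hn HB0 (eps / 2)) as [K HK]. lra.
  assert (HE0 : 0 <= EE n B K).
  { unfold EE. pose proof (theta_pos n). pose proof (mu_pos n Hn).
    assert (0 <= mu n ^ K) by (apply pow_le; lra).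
    assert (0 <= 2 / theta n) by (unfold Rdiv; apply Rmult_le_pos; [lra| left; apply Rinv_0_lt_compat; lra]).
    apply Rmult_le_pos; [|lra]. apply Rmult_le_pos; lra. }
  exists (mkposreal _ (inv2pow_pos (S K))). simpl. intros h Hh0 Hh.
  assert (Hh2 : Rabs h < / 2 ^ K / 2) by (rewrite <- inv2pow_S; exact Hh). clear Hh. rename Hh2 into Hh.
  assert (Hcond : forall a b, a <= b -> x - / 2 ^ K / 2 <= a -> b <= x + / 2 ^ K / 2 ->
    forall k l, (S K <= k)%nat -> a - / 2 ^ k < IZR l / 2 ^ k -> IZR l / 2 ^ k <= b ->
    Rabs (dd n f0 k l - GG n f0 x) <= EE n B K).
  { intros a b Hab Ha Hb k l Hk H1 H2. apply (G_spec n f0 B Hn HB x K k l). lia.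
    assert (/ 2 ^ k <= / 2 ^ S K) by (apply inv2pow_mono; lia). rewrite inv2pow_S in H.
    apply abs_le_iff. lra. }
  assert (Hmain : Rabs (F (x + h) - F x - GG n f0 x * h) <= EE n B K * Rabs h).
  { destruct (Rle_or_lt 0 h) as [Hp|Hneg].
    - rewrite (Rabs_pos_eq h) by lra.
      replace (F (x + h) - F x - GG n f0 x * h) with (F (x + h) - F x - GG n f0 x * ((x + h) - x)) by ring.
      replace (EE n B K * h) with (EE n B K * ((x + h) - x)) by ring.
      apply (interval n f0 F HF (GG n f0 x) (EE n B K) (S K) x (x + h)); auto. lra.
      apply Hcond; apply Rabs_def2 in Hh; lra.
    - rewrite (Rabs_left h) by lra.
      replace (F (x + h) - F x - GG n f0 x * h) with (- (F x - F (x + h) - GG n f0 x * (x - (x + h)))) by ring.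
      rewrite Rabs_Ropp. replace (- h) with (x - (x + h)) by ring.
      apply (interval n f0 F HF (GG n f0 x) (EE n B K) (S K) (x + h) x); auto. lra.
      apply Hcond; apply Rabs_def2 in Hh; lra. }
  replace ((F (x + h) - F x) / h - GG n f0 x) with ((F (x + h) - F x - GG n f0 x * h) / h) by (field; auto).
  unfold Rdiv. rewrite Rabs_mult, Rabs_inv.
  assert (0 < Rabs h) by (apply Rabs_pos_lt; auto).
  apply Rle_lt_trans with (EE n B K).
  - apply Rmult_le_reg_r with (Rabs h); auto. rewrite Rmult_assoc, Rinv_l by lra. lra.
  - lra.
Qed.

Theorem theorem2 (n : nat) (Hn : (2 <= n)%nat) (f0 : Z -> R)
  (Hb : bounded_seq f0) (F : R -> R) (HF : is_limit_function n f0 F) :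
  is_C1 F.
Proof.
  destruct Hb as [B HB].
  assert (Hd : forall x, is_derive F x (GG n f0 x)).
  { intros x. apply is_derive_Reals. apply (deriv n f0 B); auto. }
  split.
  - intros x. exists (GG n f0 x). apply Hd.
  - intros x. apply continuous_ext with (GG n f0).
    intros y. symmetry. apply is_derive_unique. apply Hd.
    apply (G_cont n f0 B); auto.
Qed.
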